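(* Let $K$ be a field of characteristic $0$, let $\alpha \in K$, and let $m,n$ be relatively prime positive integers. Then $\lambda_K(\alpha,m)\,\lambda_K(\alpha,n) = \lambda_K(\alpha,mn)$.
   Context: For a field $K$, an element $\alpha \in K$ and a positive integer $n$, $\lambda_K(\alpha,n)$ denotes the minimal degree of an irreducible factor of $t^n - \alpha$ in $K[t]$. *)

(* Defs.v *)
From mathcomp Require Import all_boot all_algebra.
Set Implicit Arguments. Unset Strict Implicit. Unset Printing Implicit Defensive.
Import GRing.Theory.
Local Open Scope ring_scope.

(* is_lambda K a n d  <->  d = lambda_K(a, n), i.e. d is the minimal degree of
   an irreducible factor of t^n - a in K[t]. *)
Definition is_lambda (K : fieldType) (a : K) (n : nat) (d : nat) : Prop :=
  (exists p : {poly K},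
      irreducible_poly p /\ p %| ('X^n - a%:P) /\ (size p).-1 = d) /\
  (forall p : {poly K},
      irreducible_poly p -> p %| ('X^n - a%:P) -> (d <= (size p).-1)%N).

(* Main.v *)
Require Import Defs.
From mathcomp Require Import all_boot all_algebra.
From HB Require Import structures.
From mathcomp Require Import all_boot all_algebra all_field.
From Stdlib Require Import Classical.
From mathcomp Require Import ring.
Set Implicit Arguments. Unset Strict Implicit. Unset Printing Implicit Defensive.
Import GRing.Theory.
Local Open Scope ring_scope.

Lemma ex_min_nat (P : nat -> Prop) : (exists n, P n) -> exists n, P n /\ forall m, P m -> (n <= m)%N.
Proof.
move=> [n Pn]; apply: NNPP => H.
suff: forall m k, (k <= m)%N -> ~ P k by move/(_ n n (leqnn n)).
elim=> [|m IH] k.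
  rewrite leqn0 => /eqP -> P0; apply: H; exists 0%N; split => // m _; exact: leq0n.
rewrite leq_eqVlt => /orP[/eqP -> Pm|]; last by rewrite ltnS; apply: IH.
apply: H; exists m.+1; split => // j Pj; rewrite leqNgt; apply/negP => lt.
by apply: (IH j) => //; rewrite -ltnS.
Qed.

Notation "p ^^ L" := (map_poly (in_alg L) p) (at level 30).

Section Gen.
Variable K : fieldType.

Lemma irr_factor (p : {poly K}) : (1 < size p)%N -> exists r, irreducible_poly r /\ r %| p.
Proof.
elim: {p}(size p) {-2}p (leqnn (size p)) => [|N IH] p le_p sp.
  by move: (leq_trans sp le_p).
have [irr|nirr] := classic (irreducible_poly p); first by exists p; split.
have [q [q1 qp nqp]] : exists q : {poly K}, [/\ size q != 1%N, q %| p & ~~ (q %= p)].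
  apply: NNPP => H; apply: nirr; split => // q q1 qp.
  by apply: NNPP => nq; apply: H; exists q; split => //; apply/negP.
have p0 : p != 0 by rewrite -size_poly_gt0 (ltn_trans _ sp).
have q0 : q != 0 by apply: contraNneq p0 => q0; move: qp; rewrite q0 dvd0p.
have sq : (size q < size p)%N.
  rewrite ltn_neqAle dvdp_leq // andbT; apply: contra nqp => /eqP e.
  by rewrite -dvdp_size_eqp // e.
have sqN : (size q <= N)%N by rewrite -ltnS (leq_trans sq).
have sq1 : (1 < size q)%N by rewrite ltn_neqAle eq_sym q1 size_poly_gt0 q0.
have [r [ir rq]] := IH q sqN sq1.
by exists r; split => //; apply: dvdp_trans rq qp.
Qed.


Lemma map_XnC (L : fieldExtType K) n (a : K) :
  ('X^n - a%:P) ^^ L = 'X^n - (a%:A)%:P.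
Proof. by rewrite rmorphB /= map_polyXn map_polyC. Qed.

Lemma root_XnC (L : fieldExtType K) (y : L) n a :
  root (('X^n - a%:P) ^^ L) y = (y ^+ n == a%:A).
Proof. by rewrite map_XnC rootE !hornerE subr_eq0. Qed.

Lemma dim_adj1 (L : fieldExtType K) (y : L) :
  \dim <<1; y>>%VS = adjoin_degree 1%VS y.
Proof. by rewrite dim_Fadjoin dimv1 muln1. Qed.

Lemma root_factor (L : fieldExtType K) (y : L) (P : {poly K}) :
  P != 0 -> root (P ^^ L) y ->
  exists f, [/\ irreducible_poly f, f %| P & (size f).-1 = \dim <<1; y>>%VS].
Proof.
move=> P0 rP.
have /polyOver1P[q Dq] := minPolyOver 1%VS y.
have szq : size q = (adjoin_degree 1%VS y).+1.
  by rewrite -(size_map_poly (in_alg L)) -Dq size_minPoly.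
exists q; split.
- split; first by rewrite szq ltnS /adjoin_degree.
  move=> r r1 rq.
  have := @minPoly_irr _ _ 1%VS y (r ^^ L).
  rewrite Dq dvdp_map => /(_ (alg_polyOver _ _) rq) /orP[|].
    by rewrite eqp_map.
  by rewrite -size_poly_eq1 size_map_poly (negPf r1).
- rewrite -(dvdp_map (in_alg L)) -Dq; apply: minPoly_dvdp => //.
  exact: alg_polyOver.
- by rewrite szq dim_adj1.
Qed.

Lemma root_dvd (L : fieldExtType K) (x : L) (f P : {poly K}) :
  root (f ^^ L) x -> f %| P -> root (P ^^ L) x.
Proof. by move=> rf /dvdpP[r ->]; rewrite rmorphM rootM rf orbT. Qed.

Lemma XnC_neq0 n (a : K) : (0 < n)%N -> 'X^n - a%:P != 0.
Proof. by move=> n0; rewrite monic_neq0 // monicXnsubC. Qed.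

Definition good (a : K) (n Lam : nat) :=
  [/\ (Lam %| n)%N,
      (exists f, [/\ irreducible_poly f, f %| 'X^n - a%:P & (size f).-1 = Lam]) &
      (forall f, irreducible_poly f -> f %| 'X^n - a%:P -> (Lam %| (size f).-1)%N)].

Lemma irr_deg_gt0 (f : {poly K}) : irreducible_poly f -> (0 < (size f).-1)%N.
Proof. by case=> s _; rewrite -ltnS prednK // (ltn_trans _ s). Qed.

Lemma lower (a : K) m n Lm Ln f : (0 < m)%N -> (0 < n)%N ->
  good a m Lm -> good a n Ln -> coprime m n ->
  irreducible_poly f -> f %| 'X^(m * n) - a%:P -> (Lm * Ln %| (size f).-1)%N.
Proof.
move=> m0 n0 [Lmm _ Lmd] [Lnn _ Lnd] cmn irrf fd.
have [L dimL [x rx full]] := irredp_FAdjoin irrf.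
have rx' : x ^+ (m * n) == a%:A by rewrite -root_XnC (root_dvd rx fd).
have dL (y : L) : (\dim <<1; y>>%VS %| (size f).-1)%N.
  by rewrite -dimL; have := @field_dimS _ _ <<1; y>>%AS (aspacef L) (subvf _).
have cL : coprime Lm Ln.
  by apply: (coprime_dvdl Lmm); apply: (coprime_dvdr Lnn).
rewrite Gauss_dvd //; apply/andP; split.
- have r1 : root (('X^m - a%:P) ^^ L) (x ^+ n).
    by rewrite root_XnC -exprM mulnC.
  have [g [ig gd sg]] := root_factor (XnC_neq0 a m0) r1.
  by apply: dvdn_trans (Lmd g ig gd) _; rewrite sg dL.
- have r1 : root (('X^n - a%:P) ^^ L) (x ^+ m).
    by rewrite root_XnC -exprM.
  have [g [ig gd sg]] := root_factor (XnC_neq0 a n0) r1.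
  by apply: dvdn_trans (Lnd g ig gd) _; rewrite sg dL.
Qed.

End Gen.

Section Up.
Variable K : fieldType.

Lemma bez m n : (0 < m)%N -> coprime m n -> exists s t, (s * m = 1 + t * n)%N.
Proof.
move=> m0 c; have [t _] := Bezoutl n m0; rewrite (eqP c) => d.
by exists ((1 + t * n) %/ m)%N, t; rewrite divnK.
Qed.

Lemma upper (a : K) m n Lm Ln : a != 0 -> (0 < m)%N -> (0 < n)%N ->
  coprime m n -> good a m Lm -> good a n Ln ->
  exists f, [/\ irreducible_poly f, f %| 'X^(m * n) - a%:P &
              ((size f).-1 <= Lm * Ln)%N].
Proof.
move=> a0 m0 n0 cmn [_ [g [ig gd sg]] _] [_ [h [ih hd sh]] _].
have [L1 dimL1 [c rc _]] := irredp_FAdjoin ig.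
have cm : c ^+ m = a%:A by apply/eqP; rewrite -root_XnC (root_dvd rc gd).
have sh1 : (1 < size (h ^^ L1))%N by rewrite size_map_poly; case: ih.
have [r [ir rh]] := irr_factor sh1.
have [L2 dimL2 [d rd _]] := irredp_FAdjoin ir.
have dn : d ^+ n = (a%:A : L1)%:A.
  apply/eqP; rewrite -root_XnC; apply: (root_dvd rd); apply: dvdp_trans rh _.
  by rewrite -map_XnC dvdp_map.
pose L0 := baseFieldType L2.
have A0 : (a%:A : L0) = (a%:A : L1)%:A.
  by rewrite /GRing.scale /= -[LHS]/(a *: (1 : L0)) baseField_scaleE.
pose c' : L2 := (c%:A : L2).
have cm' : c' ^+ m = (a%:A : L1)%:A.
  by rewrite (_ : c' = in_alg L2 c) // -rmorphXn cm.
have [s [t st]] := bez m0 cmn.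
set AA := ((a%:A : L1)%:A : L2).
have AA0 : AA != 0.
  by rewrite /AA !(fmorph_eq0 (in_alg _)).
pose b : L2 := d ^+ s / c' ^+ t.
have bmn : b ^+ (m * n) = AA.
  rewrite /b exprMn exprVn -!exprM.
  rewrite (_ : (s * (m * n) = n * (s * m))%N); last by ring.
  rewrite (_ : (t * (m * n) = m * (t * n))%N); last by ring.
  rewrite !exprM dn cm' -/AA.
  rewrite -!exprM st exprD expr1 -mulrA mulfV ?mulr1 //.
  by rewrite expf_neq0.
have rb : root (('X^(m * n) - a%:P) ^^ L0) (b : L0).
  by rewrite root_XnC A0 /= bmn.
have mn0 : (0 < m * n)%N by rewrite muln_gt0 m0 n0.
have [f [irf fd sf]] := root_factor (XnC_neq0 a mn0) rb.
exists f; split => //; rewrite sf.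
apply: leq_trans (dimvS (subvf _)) _.
have sub0 : (fullv <= baseVspace (fullv : {vspace L2}))%VS.
  by apply/subvP => u _; rewrite mem_baseVspace; apply: (@memvf _ _ (u : L2)).
apply: leq_trans (dimvS sub0) _.
rewrite dim_baseVspace dimL2 dimL1 sg mulnC leq_mul2l; apply/orP; right.
rewrite -sh -(size_map_poly (in_alg L1)) -!subn1 leq_sub2r // dvdp_leq //.
by rewrite -size_poly_gt0 (ltn_trans _ sh1).
Qed.

Lemma good_mul (a : K) m n Lm Ln : a != 0 -> (0 < m)%N -> (0 < n)%N ->
  coprime m n -> good a m Lm -> good a n Ln -> good a (m * n) (Lm * Ln).
Proof.
move=> a0 m0 n0 cmn gm gn; split.
- by case: gm => ? _ _; case: gn => ? _ _; apply: dvdn_mul.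
- have [f [irf fd sf]] := upper a0 m0 n0 cmn gm gn.
  exists f; split => //; apply/eqP; rewrite eqn_leq sf /=.
  apply: dvdn_leq; first exact: irr_deg_gt0.
  exact: lower m0 n0 gm gn cmn irf fd.
- by move=> f irf fd; apply: lower m0 n0 gm gn cmn irf fd.
Qed.

Lemma good_lambda (a : K) n Lam d : good a n Lam -> is_lambda a n d -> d = Lam.
Proof.
case=> _ [f [irf fd sf]] H [[g [irg [gd sg]]] Hd].
apply/eqP; rewrite eqn_leq; apply/andP; split.
  by rewrite -sf; apply: Hd.
by rewrite -sg dvdn_leq ?H // irr_deg_gt0.
Qed.
End Up.

Section KeyB.
Variables (K : fieldType) (L : fieldExtType K).

Lemma prod_roots (w y : L) p : p.-primitive_root w -> y != 0 ->
  'X^p - (y ^+ p)%:P = \prod_(z <- [seq y * w ^+ j | j <- iota 0 p]) ('X - z%:P).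
Proof.
move=> pw y0; have p0 : (0 < p)%N := prim_order_gt0 pw.
set rs := [seq _ | _ <- _].
have ur : uniq rs.
  rewrite map_inj_in_uniq ?iota_uniq // => i j; rewrite !mem_iota !add0n.
  move=> /andP[_ ip] /andP[_ jp] /(mulfI y0) /eqP.
  by rewrite (eq_prim_root_expr pw) !modn_small // => /eqP.
have ar : all (root ('X^p - (y ^+ p)%:P)) rs.
  apply/allP => z /mapP[j _ ->]; rewrite rootE !hornerE exprMn -exprM mulnC.
  by rewrite exprM (prim_expr_order pw) expr1n mulr1 subrr.
have ur' : uniq_roots rs by rewrite uniq_rootsE.
have [q' Dq] := uniq_roots_prod_XsubC ar ur'.
have dv : \prod_(z <- rs) ('X - z%:P) %| 'X^p - (y ^+ p)%:P.
  by rewrite Dq dvdp_mull.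
apply/eqP; rewrite -eqp_monic ?monicXnsubC ?monic_prod_XsubC //.
rewrite eqp_sym -dvdp_size_eqp // size_prod_XsubC size_XnsubC // size_map.
by rewrite size_iota.
Qed.

Lemma prod_neg_sub (F : {subfield L}) (w y : L) (n : nat) (ss : seq L) :
  w \in F -> w != 0 -> {subset ss <= [seq y * w ^+ j | j <- iota 0 n]} ->
  exists c, [/\ c \in F, c != 0 & \prod_(z <- ss) (- z) = c * y ^+ size ss].
Proof.
move=> wF w0; elim: ss => [|z ss IH] sub.
  by exists 1; rewrite big_nil mul1r expr0 rpred1 oner_neq0.
have [|c [cF c0 Dc]] := IH.
  by move=> u uin; apply: sub; rewrite inE uin orbT.
have /mapP[j _ ->] := sub z (mem_head _ _).
exists (- w ^+ j * c); split.
- by rewrite rpredM ?rpredN ?rpredX.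
- by rewrite mulf_neq0 // oppr_eq0 expf_neq0.
- by rewrite big_cons Dc /= exprS; ring.
Qed.

Lemma adj_deg_1p (F : {subfield L}) (w y : L) p : prime p ->
  p.-primitive_root w -> w \in F -> y != 0 -> y ^+ p \in F ->
  adjoin_degree F y = 1%N \/ adjoin_degree F y = p.
Proof.
move=> pp pw wF y0 ypF; have p0 : (0 < p)%N := prim_order_gt0 pw.
have w0 : w != 0.
  apply/negP => /eqP w0; have := prim_expr_order pw.
  by rewrite w0 expr0n gtn_eqF // => /eqP; rewrite eq_sym oner_eq0.
set s := adjoin_degree F y.
have gd : minPoly F y %| 'X^p - (y ^+ p)%:P.
  apply: minPoly_dvdp; first by rewrite polyOverXnsubC.
  by rewrite rootE !hornerE subrr.
have s_le : (s <= p)%N.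
  have := dvdp_leq (XnC_neq0 (y ^+ p) p0) gd.
  by rewrite size_minPoly size_XnsubC.
move: gd; rewrite (prod_roots pw y0) => gd.
have [msk Dg] := dvdp_prod_XsubC gd.
set ss := mask msk _ in Dg.
have {}Dg : minPoly F y = \prod_(z <- ss) ('X - z%:P).
  by apply/eqP; rewrite -eqp_monic ?monic_minPoly ?monic_prod_XsubC.
have szs : size ss = s.
  by apply/succn_inj; rewrite -(size_prod_XsubC ss id) -Dg size_minPoly.
have [c [cF c0 Dc]] := @prod_neg_sub F w y p ss wF w0 (fun z zin => mem_mask zin).
have g0F : (minPoly F y).[0] \in F.
  by rewrite horner_coef0; apply/polyOverP; apply: minPolyOver.
rewrite Dg horner_prod (eq_bigr (fun z => - z)) ?Dc ?szs in g0F; last first.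
  by move=> z _; rewrite hornerXsubC sub0r.
have ysF : y ^+ s \in F.
  by rewrite -(mulKf c0 (y ^+ s)) rpredM ?rpredV.
have s0 : (0 < s)%N by rewrite /s /adjoin_degree.
have [lt|ge] := ltnP s p; last by right; apply/eqP; rewrite eqn_leq s_le ge.
left; apply/eqP; rewrite adjoin_deg_eq1.
have cs : coprime s p.
  by rewrite coprime_sym prime_coprime // gtnNdvd.
have [u [t ut]] := bez s0 cs.
have -> : y = (y ^+ s) ^+ u / (y ^+ p) ^+ t.
  rewrite -!exprM mulnC ut exprD expr1 mulnC -mulrA mulfV ?mulr1 //.
  by rewrite expf_neq0.
by rewrite rpredM ?rpredV // rpredX.
Qed.
End KeyB.

Lemma prim_of_unity (K : fieldType) (L : fieldExtType K) (z : K) p :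
  prime p -> z ^+ p = 1 -> z != 1 -> p.-primitive_root (z%:A : L).
Proof.
move=> pp zp z1; have p0 := prime_gt0 pp.
have wp : (z%:A : L) ^+ p = 1 by rewrite -(rmorphXn (in_alg L)) /= zp scale1r.
have [m pm mp] := prim_order_exists p0 wp.
have [m1|m1] := eqVneq m 1%N.
  move: pm; rewrite m1 => /prim_expr_order; rewrite expr1 => /eqP.
  by rewrite (fmorph_eq1 (in_alg L)) (negPf z1).
by move: mp pm => /(prime_nt_dvdP pp m1) ->.
Qed.

Lemma ppow_deg (K : fieldType) (a z : K) p k : prime p -> a != 0 ->
  z ^+ p = 1 -> z != 1 -> forall f, irreducible_poly f ->
  f %| 'X^(p ^ k) - a%:P -> exists e, (size f).-1 = (p ^ e)%N.
Proof.
move=> pp a0 zp z1 f irf fd.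
have [L dimL [x rx full]] := irredp_FAdjoin irf.
have xk : x ^+ (p ^ k) = a%:A by apply/eqP; rewrite -root_XnC (root_dvd rx fd).
have x0 : x != 0.
  apply/negP => /eqP x0; move: xk; rewrite x0 expr0n expn_eq0.
  rewrite (gtn_eqF (prime_gt0 pp)) /= => /esym/eqP.
  by rewrite (fmorph_eq0 (in_alg L)) (negPf a0).
pose w : L := z%:A.
have pw : p.-primitive_root w by apply: prim_of_unity.
have wF (F : {subfield L}) : w \in F.
  by apply: (subvP (sub1v F)); rewrite /w memvZ // mem1v.
suff H : forall j, (j <= k)%N -> exists e, \dim <<1; x ^+ (p ^ (k - j))>>%VS = (p ^ e)%N.
  have [e De] := H k (leqnn k); exists e.
  by rewrite -De subnn expn0 expr1 full dimL.
elim=> [|j IH] jk.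
  exists 0%N; rewrite subn0 xk expn0.
  have /Fadjoin_idP -> : (a%:A : L) \in (1%AS : {subfield L}) by rewrite memvZ // mem1v.
  by rewrite dimv1.
have [e De] := IH (ltnW jk).
set y := x ^+ (p ^ (k - j.+1)).
have yp : y ^+ p = x ^+ (p ^ (k - j)).
  by rewrite -exprM -expnSr subnSK.
have y0 : y != 0 by rewrite expf_neq0.
have E : <<1; y>>%VS = << <<1; y ^+ p>>%AS; y>>%VS.
  rewrite adjoinC; apply/esym/Fadjoin_idP.
  by rewrite rpredX // memv_adjoin.
rewrite E dim_Fadjoin /=.
have ypF : y ^+ p \in <<1; y ^+ p>>%AS by rewrite memv_adjoin.
have [->|->] := adj_deg_1p pp pw (wF _) y0 ypF; rewrite yp De.
- by exists e; rewrite mul1n.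
- by exists e.+1; rewrite expnS.
Qed.

Lemma norm_pow (K : fieldType) (L : fieldExtType K) (x : L) N (a : K) :
  x ^+ N = a%:A -> exists b : K, b ^+ N = a ^+ \dim {:L}.
Proof.
move=> xN.
pose e := vbasis (fullv : {vspace L}).
have eb : basis_of fullv e := vbasisP fullv.
pose Nm (u : L) := \det (passmx.mxof e e (amulr u)).
have NmM u v : Nm (u * v) = Nm u * Nm v.
  rewrite /Nm (_ : amulr (u * v) = (amulr v \o amulr u)%VF).
    by rewrite (@passmx.mxof_comp _ _ _ _ e e e eb) det_mulmx.
  by apply/lfunP => w; rewrite comp_lfunE !lfunE /= mulrA.
have Nm1 : Nm 1 = 1.
  rewrite /Nm (_ : amulr 1 = \1%VF); first by rewrite passmx.mxof1 ?det1 // (basis_free eb).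
  by apply/lfunP => w; rewrite id_lfunE lfunE /= mulr1.
have NmX u n : Nm (u ^+ n) = Nm u ^+ n.
  by elim: n => [|n IH]; rewrite ?expr0 // !exprS NmM IH.
have NmA c : Nm (c%:A) = c ^+ \dim {:L}.
  rewrite /Nm (_ : amulr c%:A = c *: \1%VF).
    rewrite -[c *: _]addr0 passmx.mxof_linear (_ : passmx.mxof e e 0 = 0).
      by rewrite addr0 passmx.mxof1 ?(basis_free eb) // scalemx1 det_scalar.
    by apply/eqP; rewrite passmx.mxof_eq0.
  by apply/lfunP => w; rewrite lfunE /= lfunE /= id_lfunE mulr_algr.
by exists (Nm x); rewrite -NmX xN NmA.
Qed.

Lemma unity_p (K : fieldType) p :
  (forall z : K, z ^+ p = 1 -> z = 1) -> forall j (z : K), z ^+ (p ^ j) = 1 -> z = 1.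
Proof.
move=> H; elim=> [|j IH] z; first by rewrite expn0 expr1.
by rewrite expnSr exprM => /H /IH.
Qed.

Lemma good_pp (K : fieldType) (a : K) p k : a != 0 -> prime p ->
  exists Lam, good a (p ^ k) Lam.
Proof.
move=> a0 pp; set q := (p ^ k)%N.
have q0 : (0 < q)%N by rewrite expn_gt0 prime_gt0.
set P := 'X^q - a%:P.
have sP : (1 < size P)%N by rewrite size_XnsubC.
pose Q i := exists f, [/\ irreducible_poly f, f %| P & logn p (size f).-1 = i].
have [i0 [[f0 [irf0 fd0 lf0]] imin]] : exists i, Q i /\ forall j, Q j -> (i <= j)%N.
  apply: ex_min_nat; have [f [irf fd]] := irr_factor sP.
  by exists (logn p (size f).-1), f.
have Hdiv f : irreducible_poly f -> f %| P -> (p ^ i0 %| (size f).-1)%N.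
  move=> irf fd; rewrite pfactor_dvdn ?irr_deg_gt0 //.
  by apply: imin; exists f.
set D0 := (size f0).-1.
have D0pos : (0 < D0)%N by apply: irr_deg_gt0.
have D0q : (D0 <= q)%N.
  have := dvdp_leq (XnC_neq0 a q0) fd0; rewrite size_XnsubC //.
  by rewrite /D0 -subn1 leq_subLR add1n.
have ik : (i0 <= k)%N.
  have := leq_trans (dvdn_leq D0pos (Hdiv f0 irf0 fd0)) D0q.
  by rewrite /q leq_exp2l // prime_gt1.
suff [f [irf fd sf]] : exists f, [/\ irreducible_poly f, f %| P & ((size f).-1 <= p ^ i0)%N].
  exists (p ^ i0)%N; split.
  - by apply: dvdn_exp2l.
  - exists f; split => //; apply/eqP; rewrite eqn_leq sf /=.
    by apply: dvdn_leq; [apply: irr_deg_gt0 | apply: Hdiv].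
  - exact: Hdiv.
have [[z [zp z1]]|nz] := classic (exists z : K, z ^+ p = 1 /\ z != 1).
  have [e De] := ppow_deg pp a0 zp z1 irf0 fd0.
  exists f0; split => //; rewrite -lf0 De pfactorK //.
have H1 : forall z : K, z ^+ p = 1 -> z = 1.
  move=> z zp; apply/eqP; apply: NNPP => z1; apply: nz; exists z; split => //.
  by apply/negP.
have [L dimL [x rx full]] := irredp_FAdjoin irf0.
have xq : x ^+ q = a%:A by apply/eqP; rewrite -root_XnC (root_dvd rx fd0).
have [b0 hb0] := norm_pow xq.
rewrite dimL -/D0 in hb0.
have [c0 cp D0e] := pfactor_coprime pp D0pos.
rewrite lf0 in D0e.
have c0pos : (0 < c0)%N by move: D0pos; rewrite D0e muln_gt0 => /andP[].
have cq : coprime c0 q by rewrite coprime_sym coprimeXl.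
have [s [t st]] := bez c0pos cq.
set b := b0 ^+ s / a ^+ (t * p ^ i0).
have hb : b ^+ q = a ^+ (p ^ i0).
  rewrite /b exprMn exprVn -!exprM mulnC exprM hb0 -exprM D0e.
  rewrite (_ : (c0 * p ^ i0 * s = p ^ i0 * (s * c0))%N); last by ring.
  rewrite st mulnDr muln1 exprD.
  rewrite (_ : (t * p ^ i0 * q = p ^ i0 * (t * q))%N); last by ring.
  by rewrite -mulrA mulfV ?mulr1 // expf_neq0.
set M := (p ^ (k - i0))%N.
have qM : q = (p ^ i0 * M)%N by rewrite /q /M -expnD subnKC.
have bM : b ^+ M = a.
  have om : (b ^+ M / a) ^+ (p ^ i0) = 1.
    by rewrite exprMn exprVn -exprM mulnC -qM hb mulfV // expf_neq0.
  have := unity_p H1 om => /eqP; rewrite -[X in _ == X](mulfV a0).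
  by move/eqP/(mulIf (invr_neq0 a0)).
set R := 'X^(p ^ i0) - b%:P.
have pi0 : (0 < p ^ i0)%N by rewrite expn_gt0 prime_gt0.
have sR : (1 < size R)%N by rewrite size_XnsubC.
have RP : R %| P.
  rewrite /P qM exprM -bM rmorphXn subrXX.
  by apply: dvdp_mulr.
have [r [ir rR]] := irr_factor sR.
exists r; split => //; first by apply: dvdp_trans rR RP.
have := dvdp_leq (XnC_neq0 b pi0) rR; rewrite size_XnsubC //.
by rewrite -subn1 leq_subLR add1n.
Qed.

Lemma good_zero (K : fieldType) n : (0 < n)%N -> good (0 : K) n 1.
Proof.
move=> n0; split => //.
exists ('X - 0%:P); split; rewrite ?size_XsubC //; first exact: irredp_XsubC.
by rewrite polyC0 !subr0 -(prednK n0) exprS dvdp_mulr.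
Qed.

Lemma good_all (K : fieldType) (a : K) n : a != 0 -> (0 < n)%N ->
  exists Lam, good a n Lam.
Proof.
move=> a0; elim: n {-2}n (leqnn n) => [|N IH] n nN n0.
  by move: (leq_trans n0 nN).
have [n1|n1] := eqVneq n 1%N.
  by rewrite n1; apply: (@good_pp _ a 2 0).
have n1' : (1 < n)%N by rewrite ltn_neqAle eq_sym n1 n0.
have pp := pdiv_prime n1'; set p := pdiv n in pp.
have [m cpm Dn] := pfactor_coprime pp n0.
set k := logn p n in Dn.
have k0 : (0 < k)%N by rewrite logn_gt0 mem_primes pp n0 pdiv_dvd.
have m0 : (0 < m)%N by move: n0; rewrite Dn muln_gt0 => /andP[].
have pk1 : (1 < p ^ k)%N by rewrite -(expn0 p) ltn_exp2l ?prime_gt1.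
have mn : (m < n)%N by rewrite Dn ltn_Pmulr.
have [Lm gm] := IH m (leq_trans mn nN) m0.
have [Lq gq] := good_pp k a0 pp.
exists (Lm * Lq)%N; rewrite Dn.
apply: good_mul => //; first by rewrite expn_gt0 prime_gt0.
by rewrite coprime_sym coprimeXl.
Qed.

Theorem proposition1p4 (K : fieldType) (a : K) (m n : nat) :
  [pchar K] =i pred0 ->
  (0 < m)%N -> (0 < n)%N -> coprime m n ->
  forall dm dn dmn : nat,
    is_lambda a m dm -> is_lambda a n dn -> is_lambda a (m * n) dmn ->
    (dm * dn)%N = dmn.
Proof.
move=> _ m0 n0 cmn dm dn dmn Hm Hn Hmn.
have mn0 : (0 < m * n)%N by rewrite muln_gt0 m0 n0.
case: (eqVneq a 0) Hm Hn Hmn => [->|a0] Hm Hn Hmn.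
  by rewrite (good_lambda (good_zero _ m0) Hm) (good_lambda (good_zero _ n0) Hn)
     (good_lambda (good_zero _ mn0) Hmn).
have [Lm gm] := good_all a0 m0; have [Ln gn] := good_all a0 n0.
have gmn := good_mul a0 m0 n0 cmn gm gn.
by rewrite (good_lambda gm Hm) (good_lambda gn Hn) (good_lambda gmn Hmn).
Qed.
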